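(* Let $\epsilon\in(0,1/3)$ and let $A\in\mathbb{C}^{\ell\times\ell}$ be a matrix with nonnegative entries such that $A_{0,0}=1-\epsilon$ and $\sum_{i,j}A_{i,j}=1$. Then $A$ has a unique eigenvalue $\mu$ (of algebraic multiplicity one) satisfying $$|\mu-A_{0,0}|\le\frac{\epsilon^2}{1-2\epsilon},$$ and every other eigenvalue $\lambda$ of $A$ satisfies $|\lambda|\le\epsilon$. In particular, $\mu$ is the unique eigenvalue of maximal modulus and $\mu=A_{0,0}+O(\epsilon^2)$.
   Context: Rows and columns of $A$ are indexed by $0,\dots,\ell-1$. *)

(* Defs.v *)
From HB Require Import structures.
From mathcomp Require Import all_boot all_order all_algebra.
From mathcomp Require Import complex.
From mathcomp Require Import reals.
Set Implicit Arguments. Unset Strict Implicit. Unset Printing Implicit Defensive.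

(* Main.v *)
Require Import Defs.
From HB Require Import structures.
From mathcomp Require Import all_boot all_order all_algebra.
From mathcomp Require Import complex.
From mathcomp Require Import reals.
Import Order.TTheory GRing.Theory Num.Theory ComplexField.
Local Open Scope ring_scope.
Local Open Scope complex_scope.
From mathcomp Require Import ring lra.
Set Implicit Arguments. Unset Strict Implicit.

Section NR.
Context {R : realType}.
Implicit Types x y z : R[i].

Definition nr (z : R[i]) : R := complex.Re `|z|.

Lemma nrE z : `|z| = (nr z)%:C.
Proof. by rewrite /nr RRe_real // normr_real. Qed.

Lemma nr_ge0 z : 0 <= nr z.
Proof. by have := normr_ge0 z; rewrite nrE ler0c. Qed.

Lemma nrD x y : nr (x + y) <= nr x + nr y.
Proof. by rewrite -lecR rmorphD /= -!nrE ler_normD. Qed.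

Lemma nrM x y : nr (x * y) = nr x * nr y.
Proof. by apply: complexI; rewrite rmorphM /= -!nrE normrM. Qed.

Lemma nrX x m : nr (x ^+ m) = nr x ^+ m.
Proof. by apply: complexI; rewrite rmorphXn /= -!nrE normrX. Qed.

Lemma nrN x : nr (- x) = nr x.
Proof. by apply: complexI; rewrite -!nrE normrN. Qed.

Lemma nrC (r : R) : 0 <= r -> nr r%:C = r.
Proof. by move=> r0; rewrite /nr ger0_norm ?ler0c. Qed.

Lemma nr_eq0 z : (nr z == 0) = (z == 0).
Proof. by rewrite -[RHS]normr_eq0 nrE -(rmorph0 (real_complex R)) (inj_eq (@complexI _)). Qed.

Lemma nr_gt0 z : (0 < nr z) = (z != 0).
Proof. by rewrite lt_def nr_ge0 nr_eq0 andbT. Qed.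

Lemma nr_sum (I : Type) (r : seq I) (P : pred I) (F : I -> R[i]) :
  nr (\sum_(i <- r | P i) F i) <= \sum_(i <- r | P i) nr (F i).
Proof.
elim/big_rec2: _ => [|i s t _ H]; first by rewrite /nr normr0.
by apply: le_trans (nrD _ _) _; rewrite lerD2l.
Qed.

Lemma nrBl x y : nr x - nr y <= nr (x - y).
Proof.
have := nrD (x - y) y; rewrite subrK => h; by rewrite lerBlDr.
Qed.

Lemma le_nrC z r : (`|z| <= r%:C) = (nr z <= r).
Proof. by rewrite nrE lecR. Qed.

Lemma lt_nrC z r : (`|z| < r%:C) = (nr z < r).
Proof. by rewrite nrE ltcR. Qed.

Lemma ge0_real z : 0 <= z -> z = (complex.Re z)%:C.
Proof. by move=> h; rewrite RRe_real // ger0_real. Qed.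

Lemma nr_ge0E z : 0 <= z -> nr z = complex.Re z.
Proof. by move=> h; rewrite (@ge0_real z h) nrC // -ler0c -ge0_real. Qed.

End NR.
Section NR2.
Context {R : realType}.
Lemma nrV (x : R[i]) : nr (x^-1) = (nr x)^-1.
Proof. apply: (@complexI _); by rewrite fmorphV /= -!nrE normfV. Qed.
End NR2.

Section G.
Variable R : realType.
Local Notation C := R[i].

Lemma exists_maxP (I : finType) (P : pred I) (F : I -> R) :
  (exists k, P k /\ forall j, P j -> F j <= F k) \/ (forall j, ~~ P j).
Proof.
case: (pickP P) => [i0 Pi0|none]; last by right => j; rewrite none.
left; case: (@arg_maxP _ _ I i0 P F Pi0) => k Pk H.
by exists k; split.
Qed.

Lemma col_eq n (v : 'rV[C]_n) (M : 'M[C]_n) lam :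
  v *m M = lam *: v -> forall k, \sum_i v 0 i * M i k = lam * v 0 k.
Proof. by move=> H k; move/rowP/(_ k): H; rewrite !mxE. Qed.

Lemma eigvec_max n (M : 'M[C]_n) lam : eigenvalue M lam ->
  exists v : 'rV_n, exists k,
    [/\ v *m M = lam *: v, v 0 k != 0 & forall j, nr (v 0 j) <= nr (v 0 k)].
Proof.
case/eigenvalueP => v Hv vnz.
case: (exists_maxP (fun j => v 0 j != 0) (fun j => nr (v 0 j))) => [[k [Pk Hk]]|none].
  exists v, k; split => // j; case: (boolP (v 0 j != 0)) => [/Hk //|].
  by rewrite negbK => /eqP ->; rewrite /nr normr0 nr_ge0.
exfalso; move/eqP: vnz; apply; apply/rowP => j.
by move/negbNE/eqP: (none j); rewrite mxE.
Qed.

Lemma gersh n (M : 'M[C]_n) lam : eigenvalue M lam ->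
  exists k, nr (lam - M k k) <= \sum_(i | i != k) nr (M i k).
Proof.
case/eigvec_max => v [k [Hv vk Hmax]]; exists k.
have E := col_eq Hv k; rewrite (bigD1 k) //= in E.
have E2 : (lam - M k k) * v 0 k = \sum_(i | i != k) v 0 i * M i k.
  by rewrite mulrBl -E (mulrC (M k k)) addrAC subrr add0r.
have pos : 0 < nr (v 0 k) by rewrite nr_gt0.
rewrite -(ler_pM2l pos) big_distrr /=.
have := @nr_sum R _ (index_enum 'I_n) (fun i => i != k) (fun i => v 0 i * M i k).
rewrite -E2 nrM mulrC => h; apply: le_trans h _.
apply: ler_sum => i _; rewrite nrM ler_wpM2r ?nr_ge0 //.
Qed.

Lemma gersh_abs n (M : 'M[C]_n) lam : eigenvalue M lam ->
  exists k, nr lam <= \sum_i nr (M i k).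
Proof.
case/gersh => k H; exists k; rewrite (bigD1 k) //=.
have := nrD (lam - M k k) (M k k); rewrite subrK => h.
apply: le_trans h _; by rewrite [X in X <= _]addrC lerD2l.
Qed.

End G.

Section G2.
Variable R : realType.
Local Notation C := R[i].

Lemma col_le n (v : 'rV[C]_n) (M : 'M[C]_n) lam k :
  v *m M = lam *: v -> nr lam * nr (v 0 k) <= \sum_i nr (v 0 i) * nr (M i k).
Proof.
move=> Hv; rewrite -nrM -(col_eq Hv k).
apply: le_trans; first exact: nr_sum. apply: ler_sum => i _; by rewrite nrM.
Qed.

Lemma col_le_diag n (v : 'rV[C]_n) (M : 'M[C]_n) lam k :
  v *m M = lam *: v ->
  nr (lam - M k k) * nr (v 0 k) <= \sum_(i | i != k) nr (v 0 i) * nr (M i k).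
Proof.
move=> Hv; have E := col_eq Hv k; rewrite (bigD1 k) //= in E.
have E2 : (lam - M k k) * v 0 k = \sum_(i | i != k) v 0 i * M i k.
  by rewrite mulrBl -E (mulrC (M k k)) addrAC subrr add0r.
rewrite -nrM E2; apply: le_trans; first exact: nr_sum. apply: ler_sum => i _; by rewrite nrM.
Qed.
End G2.

Section Main.
Variables (R : realType) (eps : R) (n : nat) (A : 'M[R[i]]_n.+1).
Hypotheses (e0 : 0 < eps) (e3 : eps < 3^-1) (Ap : forall i j, 0 <= A i j)
  (A00 : A 0 0 = (1 - eps)%:C)
  (Asum : \sum_(i < n.+1) \sum_(j < n.+1) A i j = 1).

Definition B i j := complex.Re (A i j).

Lemma nrA i j : nr (A i j) = B i j.
Proof. exact: nr_ge0E. Qed.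

Lemma B_ge0 i j : 0 <= B i j.
Proof. by rewrite -nrA nr_ge0. Qed.

Lemma B00 : B 0 0 = 1 - eps.
Proof. by rewrite /B A00. Qed.

Definition col j := \sum_i B i j.

Lemma col_sum : \sum_j col j = 1.
Proof.
rewrite /col exchange_big /=.
have := congr1 (@complex.Re R) Asum; rewrite raddf_sum /= => <-.
by apply: eq_bigr => i _; rewrite raddf_sum.
Qed.

Lemma col_ge0 j : 0 <= col j.
Proof. by apply: sumr_ge0 => i _; exact: B_ge0. Qed.

Lemma col0k k : k != 0 -> col 0 + col k <= 1.
Proof.
move=> k0; rewrite -col_sum (bigD1 0) //= (bigD1 k) //= addrA.
rewrite lerDl; apply: sumr_ge0 => j _; exact: col_ge0.
Qed.

Definition cv := \sum_(i | i != 0) B i 0.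
Definition bk k := \sum_(i | i != 0) B i k.

Lemma col_split k : col k = B 0 k + bk k.
Proof. by rewrite /col (bigD1 0). Qed.

Lemma cv_ge0 : 0 <= cv.
Proof. by apply: sumr_ge0 => i _; exact: B_ge0. Qed.
Lemma bk_ge0 k : 0 <= bk k.
Proof. by apply: sumr_ge0 => i _; exact: B_ge0. Qed.

Lemma key k : k != 0 -> cv + B 0 k + bk k <= eps.
Proof.
move=> k0; have := col0k k0; rewrite (col_split k) (col_split 0) B00 -/cv -/(bk 0).
have -> : cv = bk 0 by []. move=> h; lra.
Qed.


Definition rr := eps ^+ 2 / (1 - 2 * eps).

Lemma colk_le k : k != 0 -> col k <= eps.
Proof. move=> k0; have := key k0; have := cv_ge0; rewrite (col_split k); lra. Qed.

Lemma normalize (v : 'rV[R[i]]_n.+1) lam : v *m A = lam *: v -> v 0 0 != 0 ->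
  (forall j, nr (v 0 j) <= nr (v 0 0)) ->
  exists w : 'rV_n.+1, [/\ w *m A = lam *: w, w 0 0 = 1 & forall j, nr (w 0 j) <= 1].
Proof.
move=> Hv v0 Hm; exists ((v 0 0)^-1 *: v); split.
- by rewrite -scalemxAl Hv !scalerA mulrC.
- by rewrite mxE mulVf.
- move=> j; rewrite mxE nrM nrV; have p : 0 < nr (v 0 0) by rewrite nr_gt0.
  by rewrite mulrC ler_pdivrMr // mul1r; exact: Hm.
Qed.

Lemma dich lam : eigenvalue A lam -> nr lam <= eps \/
  (nr (lam - A 0 0) <= rr /\ exists w : 'rV_n.+1,
     [/\ w *m A = lam *: w, w 0 0 = 1 & forall j, nr (w 0 j) <= 1]).
Proof.
case/eigvec_max => v [k [Hv vk Hmax]].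
case: (eqVneq k 0) => [Ek | k0]; last first.
  left; have h := col_le k Hv.
  have h2 : \sum_i nr (v 0 i) * nr (A i k) <= nr (v 0 k) * col k.
    rewrite /col big_distrr /=; apply: ler_sum => i _.
    by rewrite nrA ler_wpM2r ?B_ge0.
  have p : 0 < nr (v 0 k) by rewrite nr_gt0.
  have := le_trans h h2; rewrite mulrC ler_pM2l // => h3.
  exact: le_trans h3 (colk_le k0).
right; subst k; split; last exact: (normalize Hv vk Hmax).
set m := nr (v 0 0); have pm : 0 < m by rewrite nr_gt0.
set X := nr (lam - A 0 0).
have X0 : 0 <= X by exact: nr_ge0.
have hX := col_le_diag 0 Hv; rewrite -/X -/m in hX.
have e3' : eps * 3 < 1 by rewrite -ltr_pdivlMr ?div1r.
have e2 : 0 < 1 - 2 * eps by lra.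
case: (exists_maxP (fun i => i != 0) (fun i => nr (v 0 i))) => [[k' [k'0 Hk']] | none]; last first.
  rewrite big_pred0 in hX; last by move=> i; apply/negbTE/none.
  have : X * m <= 0 * m by rewrite mul0r.
  rewrite ler_pM2r // => h; apply: le_trans h _.
  by rewrite /rr divr_ge0 ?sqr_ge0 ?ltW.
set M := nr (v 0 k').
have M0 : 0 <= M by exact: nr_ge0.
have h1 : \sum_(i | i != 0) nr (v 0 i) * nr (A i 0) <= M * cv.
  rewrite /cv big_distrr /=; apply: ler_sum => i i0.
  by rewrite nrA ler_wpM2r ?B_ge0 ?Hk'.
have h2 : nr lam * M <= m * B 0 k' + M * bk k'.
  apply: le_trans (col_le k' Hv) _; rewrite (bigD1 0) //= nrA lerD2l.
  rewrite /bk big_distrr /=; apply: ler_sum => i i0.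
  by rewrite nrA ler_wpM2r ?B_ge0 ?Hk'.
have h3 : M <= m by exact: Hmax.
have h4 : 1 - eps - X <= nr lam.
  have := nrBl (A 0 0) (A 0 0 - lam).
  rewrite opprB addrCA subrr addr0 -[nr (A 0 0 - lam)]nrN opprB nrA B00 -/X; lra.
have h5 := key k'0.
have cv0 := cv_ge0; have b0 := bk_ge0 k'; have w0 := B_ge0 0 k'.
have hXm : X * m <= M * cv := le_trans hX h1.
have hXc : X <= cv.
  have : X * m <= cv * m by apply: le_trans hXm _; rewrite mulrC ler_wpM2l.
  by rewrite ler_pM2r.
have p1 : (1 - eps - X - bk k') * M <= m * B 0 k'.
  have : (1 - eps - X) * M <= nr lam * M by rewrite ler_wpM2r.
  move: h2; nra.
have p2 : X * m * (1 - eps - X - bk k') <= cv * (m * B 0 k').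
  have q : 0 <= 1 - eps - X - bk k' by lra.
  apply: le_trans (_ : M * cv * (1 - eps - X - bk k') <= _).
    by rewrite ler_wpM2r.
  by move: p1; nra.
have p3 : X * (1 - eps - X - bk k') <= cv * B 0 k'.
  by rewrite -(ler_pM2r pm); move: p2; rewrite mulrAC [cv * (m * _)]mulrCA [m * (cv * _)]mulrC.
rewrite /rr ler_pdivlMr //.
have : X * (1 - 2 * eps) <= X * (1 - eps - X - bk k') by rewrite ler_wpM2l //; lra.
move=> p4; apply: le_trans p4 _; apply: le_trans p3 _; nra.
Qed.

End Main.

Section Trig.
Variable F : comNzRingType.

Lemma trig_mul n (X Y : 'M[F]_n) : is_trig_mx X -> is_trig_mx Y ->
  is_trig_mx (X *m Y) /\ forall i, (X *m Y) i i = X i i * Y i i.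
Proof.
move=> /is_trig_mxP HX /is_trig_mxP HY; split.
  apply/is_trig_mxP => i j ij; rewrite mxE big1 // => k _.
  case: (ltnP i k) => ik; first by rewrite HX // mul0r.
  by rewrite HY ?mulr0 // (leq_ltn_trans ik ij).
move=> i; rewrite mxE (bigD1 i) //= big1 ?addr0 // => k ki.
case: (ltngtP i k) => ik; first by rewrite HX // mul0r.
  by rewrite HY ?mulr0.
by move: ki; rewrite -(inj_eq val_inj) /= ik eqxx.
Qed.

Lemma trig_pow n (T : 'M[F]_n.+1) m : is_trig_mx T ->
  is_trig_mx (T ^+ m) /\ forall i, (T ^+ m) i i = T i i ^+ m.
Proof.
move=> HT; elim: m => [|m [IH1 IH2]].
  split; first by apply/is_trig_mxP => i j ij; rewrite expr0 mxE -(inj_eq val_inj) /= ltn_eqF.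
  by move=> i; rewrite expr0 mxE eqxx.
rewrite exprSr -mulmxE; have [H1 H2] := trig_mul IH1 HT; split => // i.
by rewrite H2 IH2 exprSr.
Qed.
End Trig.

Section Exist.
Variables (R : realType) (eps : R) (n : nat) (A : 'M[R[i]]_n.+1).
Hypotheses (e0 : 0 < eps) (e3 : eps < 3^-1) (Ap : forall i j, 0 <= A i j)
  (A00 : A 0 0 = (1 - eps)%:C).

Lemma pow_ge0 m i j : 0 <= (A ^+ m) i j.
Proof.
elim: m i j => [|m IH] i j; first by rewrite expr0 mxE ler0n.
rewrite exprSr -mulmxE mxE; apply: sumr_ge0 => k _; exact: mulr_ge0.
Qed.

Lemma pow00 m : ((1 - eps) ^+ m)%:C <= (A ^+ m) 0 0.
Proof.
elim: m => [|m IH]; first by rewrite !expr0 mxE eqxx.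
rewrite [A ^+ m.+1]exprSr -mulmxE mxE (bigD1 0) //= exprSr rmorphM /= -A00.
apply: (le_trans (y := (A ^+ m) 0 0 * A 0 0)); first by rewrite ler_wpM2r.
rewrite lerDl; apply: sumr_ge0 => k _; exact: mulr_ge0 (pow_ge0 _ _ _) (Ap _ _).
Qed.

Lemma exists_big : exists lam, eigenvalue A lam /\ eps < nr lam.
Proof.
have [P Pu PT] := Schur A (ltn0Sn n).
have Pun : P \in unitmx := unitarymx_unit Pu.
move: PT; rewrite /similar_to /= conjumx // => PT.
set T := P *m A *m invmx P in PT.
have eigT i : eigenvalue A (T i i).
  have : eigenvalue T (T i i).
    by rewrite eigenvalue_root_char char_poly_trig // rootE horner_prod (bigD1 i) //= hornerXsubC subrr mul0r.
  case/eigenvalueP => v Hv vnz; apply/eigenvalueP; exists (v *m P).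
    have := congr1 (mulmx^~ P) Hv; rewrite /T !mulmxA mulmxKV // -scalemxAl //.
  by apply: contraNneq vnz => h; rewrite -(mulmxK Pun v) h mul0mx.
have tr m : \tr (A ^+ m) = \sum_i T i i ^+ m.
  have -> : \tr (A ^+ m) = \tr (T ^+ m).
    have -> : T ^+ m = P *m A ^+ m *m invmx P.
      elim: m => [|m IH]; first by rewrite !expr0 mulmx1 mulmxV.
      by rewrite exprSr IH [A ^+ m.+1]exprSr -!mulmxE /T !mulmxA mulmxKV.
    by rewrite mxtrace_mulC mulKmx.
  rewrite /mxtrace; apply: eq_bigr => i _; by have [_ ->] := trig_pow m PT.
case: (pickP (fun i => eps < nr (T i i))) => [i Hi|none]; first by exists (T i i).
exfalso.
pose m := n.+1.
have e1 : 0 <= 1 - eps.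
  by rewrite subr_ge0 ltW // (lt_trans e3) // invf_lt1 // ltr1n.
have low : (1 - eps) ^+ m <= \sum_i nr (T i i) ^+ m.
  have h1 : ((1 - eps) ^+ m)%:C <= \tr (A ^+ m).
    apply: le_trans (pow00 m) _; rewrite /mxtrace (bigD1 0) //= lerDl.
    by apply: sumr_ge0 => i _; exact: pow_ge0.
  have h2 : 0 <= \tr (A ^+ m).
    by apply: le_trans h1; rewrite ler0c exprn_ge0.
  have : (1 - eps) ^+ m <= nr (\tr (A ^+ m)).
    by rewrite nr_ge0E //; move: h1; rewrite lecE => /andP [_].
  move/le_trans; apply; rewrite tr; apply: le_trans; first exact: nr_sum.
  by apply: ler_sum => i _; rewrite nrX.
have up : \sum_i nr (T i i) ^+ m <= m%:R * eps ^+ m.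
  apply: (le_trans (y := \sum_(i < n.+1) eps ^+ m)).
    apply: ler_sum => i _; apply: lerXn2r; rewrite ?nnegrE ?nr_ge0 ?(ltW e0) //.
    by move/negbT: (none i); rewrite -leNgt.
  by rewrite big_const_ord iter_addr_0 mulr_natl.
have c1 : m%:R * eps ^+ m < (2 * eps) ^+ m.
  by rewrite exprMn ltr_pM2r ?exprn_gt0 // -natrX ltr_nat ltn_expl.
have e3' : eps * 3 < 1 by rewrite -ltr_pdivlMr ?div1r.
have c2 : (2 * eps) ^+ m <= (1 - eps) ^+ m.
  apply: lerXn2r; rewrite ?nnegrE; [|lra|lra]. apply: mulr_ge0 => //; exact: ltW.
have := le_lt_trans (le_trans low up) (lt_le_trans c1 c2).
by rewrite ltxx.
Qed.

End Exist.

Lemma char_poly_conj (F : fieldType) n (S A M : 'M[F]_n) :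
  \det S = 1 -> S *m A = M *m S -> char_poly A = char_poly M.
Proof.
move=> dS E.
have E2 : map_mx polyC S *m char_poly_mx A = char_poly_mx M *m map_mx polyC S.
  by rewrite /char_poly_mx mulmxBr mulmxBl -!map_mxM E scalar_mxC.
have := congr1 determinant E2; rewrite !det_mulmx det_map_mx dS /= polyC1 mul1r mulr1.
by [].
Qed.

Lemma liftsum (V : zmodType) n (F : 'I_n.+1 -> V) :
  \sum_(i < n) F (lift 0 i) = \sum_(i | i != 0) F i.
Proof.
have := big_ord_recl n F (op := +%R) (idx := 0); rewrite (bigD1 0) //= => E.
by apply: (addrI (F 0)); exact: (esym E).
Qed.

Section Defl.
Variables (R : realType) (eps : R) (n : nat) (A : 'M[R[i]]_n.+1).
Hypotheses (e0 : 0 < eps) (e3 : eps < 3^-1) (Ap : forall i j, 0 <= A i j)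
  (A00 : A 0 0 = (1 - eps)%:C)
  (Asum : \sum_(i < n.+1) \sum_(j < n.+1) A i j = 1).
Variables (mu : R[i]) (w : 'rV[R[i]]_n.+1).
Hypotheses (Hw : w *m A = mu *: w) (w0 : w 0 0 = 1) (w1 : forall j, nr (w 0 j) <= 1).

Definition Cm : 'M[R[i]]_n :=
  \matrix_(i, j) (A (lift 0 i) (lift 0 j) - A (lift 0 i) 0 * w 0 (lift 0 j)).

Definition Sm : 'M[R[i]]_n.+1 := \matrix_(i, j) (if i == 0 then w 0 j else (i == j)%:R).

Definition Mm : 'M[R[i]]_n.+1 := \matrix_(i, j)
  (if i == 0 then (if j == 0 then mu else 0) else
   (if j == 0 then A i 0 else A i j - A i 0 * w 0 j)).

Lemma SA_MS : Sm *m A = Mm *m Sm.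
Proof.
apply/matrixP => i j; rewrite !mxE.
case: (eqVneq i 0) => [->|i0].
  transitivity (mu * w 0 j).
    by rewrite -(col_eq Hw j); apply: eq_bigr => k _; rewrite !mxE eqxx.
  rewrite (bigD1 0) //= big1 ?addr0; first by rewrite !mxE !eqxx.
  by move=> k k0; rewrite !mxE eqxx (negbTE k0) mul0r.
transitivity (A i j).
  rewrite (bigD1 i) //= big1 ?addr0; first by rewrite !mxE (negbTE i0) eqxx mul1r.
  by move=> k ki; rewrite !mxE (negbTE i0) eq_sym (negbTE ki) mul0r.
rewrite (bigD1 0) //= !mxE (negbTE i0) eqxx.
case: (eqVneq j 0) => [E|j0].
  subst j; rewrite w0 mulr1 big1 ?addr0 // => k k0.
  by rewrite !mxE (negbTE i0) (negbTE k0) mulr0.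
rewrite (bigD1 j) //= !mxE (negbTE i0) (negbTE j0) eqxx mulr1 big1 ?addr0.
  by rewrite addrC subrK.
move=> k /andP [k0 kj]; rewrite !mxE (negbTE i0) (negbTE k0) (negbTE kj) /=.
by rewrite mulr0.
Qed.

Lemma detS : \det Sm = 1.
Proof.
rewrite -det_tr det_trig.
  rewrite (bigD1 0) //= big1 ?mulr1; first by rewrite !mxE eqxx w0.
  by move=> i i0; rewrite !mxE (negbTE i0) eqxx.
apply/is_trig_mxP => i j ij; rewrite !mxE.
have j0 : j != 0 by rewrite -(inj_eq val_inj) /= -lt0n (leq_ltn_trans _ ij).
by rewrite (negbTE j0) -(inj_eq val_inj) /= gtn_eqF.
Qed.

Lemma charA : char_poly A = ('X - mu%:P) * char_poly Cm.
Proof.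
rewrite (char_poly_conj detS SA_MS) /char_poly (expand_det_row _ 0) (bigD1 0) //= big1 ?addr0.
  congr (_ * _); first by rewrite !mxE eqxx.
  rewrite /cofactor addn0 expr0 mul1r row'_col'_char_poly_mx; congr (\det (char_poly_mx _)).
  have L k : (lift (0 : 'I_n.+1) k == 0) = false by apply/negbTE; rewrite eq_sym neq_lift.
  by apply/matrixP => i j; rewrite !mxE !L.
by move=> k k0; rewrite !mxE eqxx (negbTE k0) eq_sym (negbTE k0) /= subr0 mul0r.
Qed.

Hypothesis (Hmu : 1 - 2 * eps <= nr mu).

Lemma Cm_small lam : eigenvalue Cm lam -> nr lam <= eps.
Proof.
case/gersh_abs => k Hk; apply: le_trans Hk _.
set K := lift 0 k.
have K0 : K != 0 by rewrite eq_sym neq_lift.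
have hw : nr mu * nr (w 0 K) <= B A 0 K + bk A K.
  apply: le_trans (col_le K Hw) _; rewrite -col_split /col.
  apply: ler_sum => i _; rewrite nrA //; apply: ler_piMl; [exact: B_ge0 | exact: w1].
have hs : \sum_i nr (Cm i k) <= bk A K + cv A * nr (w 0 K).
  rewrite /bk /cv -!liftsum big_distrl /= -big_split /=; apply: ler_sum => i _; rewrite mxE.
  apply: le_trans (nrD _ _) _; rewrite nrN nrM !nrA //.
apply: le_trans hs _.
have e3' : eps * 3 < 1 by rewrite -ltr_pdivlMr ?div1r.
have h5 := key Ap A00 Asum K0.
have c0 := cv_ge0 Ap; have b0 := bk_ge0 Ap K; have w0' := B_ge0 Ap 0 K.
have x0 := nr_ge0 (w 0 K).
have nu0 : 0 < nr mu by apply: lt_le_trans Hmu; lra.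
have h1 : nr mu * (bk A K + cv A * nr (w 0 K)) <= nr mu * eps.
  have : cv A * (nr mu * nr (w 0 K)) <= cv A * (B A 0 K + bk A K) by rewrite ler_wpM2l.
  have : cv A * (eps - cv A) <= cv A * nr mu by rewrite ler_wpM2l //; apply: le_trans Hmu; lra.
  nra.
by rewrite ler_pM2l in h1.
Qed.

End Defl.

Theorem theorem8 (R : realType) (eps : R) (n : nat) (A : 'M[R[i]]_(n.+1)) :
  0 < eps -> eps < 3^-1 ->
  (forall i j, 0 <= A i j) ->
  A ord0 ord0 = (1 - eps)%:C ->
  \sum_(i < n.+1) \sum_(j < n.+1) A i j = 1 ->
  exists mu : R[i],
    [/\ eigenvalue A mu /\ mup mu (char_poly A) = 1%N,
        `|mu - A ord0 ord0| <= (eps ^+ 2 / (1 - 2 * eps))%:C,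
        (forall lam, eigenvalue A lam ->
           `|lam - A ord0 ord0| <= (eps ^+ 2 / (1 - 2 * eps))%:C -> lam = mu),
        (forall lam, eigenvalue A lam -> lam != mu -> `|lam| <= eps%:C)
      & (forall lam, eigenvalue A lam -> lam != mu -> `|lam| < `|mu|)].
Proof.
move=> e0 e3 Ap A00 Asum.
have e3' : eps * 3 < 1 by rewrite -ltr_pdivlMr ?div1r.
have rr_le : rr eps <= eps.
  rewrite /rr ler_pdivrMr; last by lra.
  rewrite expr2 ler_pM2l //; lra.
have far lam : nr (lam - A 0 0) <= rr eps -> 1 - 2 * eps <= nr lam.
  move=> h; have := nrBl (A 0 0) (A 0 0 - lam).
  rewrite opprB addrCA subrr addr0 -[nr (A 0 0 - lam)]nrN opprB (nrA Ap) (B00 A00).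
  move=> h2; apply: le_trans h2; move: h rr_le; set x := nr _; lra.
have [mu [emu gmu]] := exists_big e0 e3 Ap A00.
case: (dich e3 Ap A00 Asum emu) => [h|[hmu [w [Hw w0 w1]]]].
  by exfalso; move: h; rewrite leNgt gmu.
have Hmu := far _ hmu.
have small := Cm_small e3 Ap A00 Asum Hw w1 Hmu.
have cA := charA Hw w0.
have nroot : ~~ root (char_poly (Cm A w)) mu.
  apply/negP; rewrite -eigenvalue_root_char => /small h.
  by move: h; rewrite leNgt gmu.
have others lam : eigenvalue A lam -> lam != mu -> nr lam <= eps.
  move=> el lmu; apply: small; move: el.
  rewrite !eigenvalue_root_char cA rootM root_XsubC (negbTE lmu) //.
exists mu; split.
- split => //; rewrite cA mupMl //.
  by have := mup_XsubCX 1 mu mu; rewrite expr1 eqxx.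
- by rewrite le_nrC.
- move=> lam el; rewrite le_nrC => hl; apply/eqP; apply/negP => /negP lmu.
  have := others _ el lmu; have := far _ hl; lra.
- by move=> lam el lmu; rewrite le_nrC; exact: others.
- move=> lam el lmu; rewrite !nrE ltcR; apply: le_lt_trans (others _ el lmu) _.
  exact: gmu.
Qed.
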